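(* Let $p$ be a prime, $r=p^{h'}$ with $h'\ge1$, $l\ge1$ coprime to $r$, $d\in\{1,p,p^2\}$, $M,N^*\ge1$, and complex numbers $(\alpha_m)_{m\le M}$, $(\beta_n)_{n\le N^*}$ with $\alpha_m\ll_\varepsilon m^\varepsilon$, $\beta_n\ll_\varepsilon n^\varepsilon$ for every $\varepsilon>0$. Put $$B=\sum_{1\le m\le M}\sum_{1\le n\le N^*}\alpha_m\beta_n\frac{S(ldm,n;r)}{\sqrt r},\qquad S(a,b;r)=\sum_{x\ (\mathrm{mod}\ r),\ (x,r)=1}e\Big(\frac{ax+b\overline{x}}{r}\Big).$$ Then for every $\varepsilon>0$, $$B\ll_{\varepsilon,p}(MN^*r)^\varepsilon MN^*\min_{s\mid r}\Big(\Big(\frac{r}{N^*}\Big)^{1/2}+\Big(\frac sr\Big)^{1/4}+\Big(\frac{r}{M^2s}\Big)^{1/4}\Big).$$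
   Context: $e(z)=e^{2\pi iz}$; $\overline{x}$ denotes the inverse of $x$ modulo $r$. *)

(* Defs.v *)
From Stdlib Require Import Reals Lra Lia ZArith Znumtheory List.
From Coquelicot Require Import Coquelicot.
Import ListNotations.
Open Scope R_scope.

Definition e (z : R) : C := (cos (2 * PI * z), sin (2 * PI * z)).

Definition csum (l : list nat) (f : nat -> C) : C :=
  fold_right (fun x acc => Cplus (f x) acc) (RtoC 0) l.

(* inverse of x modulo r: the y in [0, r) with x*y = 1 mod r (0 if none) *)
Definition modinv (x r : nat) : nat :=
  hd 0%nat (filter (fun y => Nat.eqb ((x * y) mod r) (1 mod r)) (seq 0 r)).

Definition kloosterman (a b r : nat) : C :=
  csum (filter (fun x => Nat.eqb (Nat.gcd x r) 1) (seq 0 r))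
       (fun x => e (INR (a * x + b * modinv x r) / INR r)).

Definition divisors (r : nat) : list nat :=
  filter (fun s => Nat.eqb (r mod s) 0) (seq 1 r).

(* min over the divisors s of r of f s (r >= 1, so 1 is a divisor) *)
Definition min_div (r : nat) (f : nat -> R) : R :=
  fold_right Rmin (f 1%nat) (map f (divisors r)).

Definition bilinB (l d M N r : nat) (alpha beta : nat -> C) : C :=
  csum (seq 1 M) (fun m =>
    csum (seq 1 N) (fun n =>
      Cmult (Cmult (alpha m) (beta n))
            (Cdiv (kloosterman (l * d * m) n r) (RtoC (sqrt (INR r)))))).

(* Main.v *)
Require Import Defs.
From Stdlib Require Import Reals ZArith Znumtheory List Lra Lia.
From Coquelicot Require Import Coquelicot.
Open Scope R_scope.

Definition rsum (l : list nat) (f : nat -> R) : R :=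
  fold_right (fun x acc => f x + acc) 0 l.

Lemma csum_nil f : csum nil f = RtoC 0. Proof. reflexivity. Qed.
Lemma csum_cons a l f : csum (a :: l) f = (f a + csum l f)%C. Proof. reflexivity. Qed.

Lemma csum_ext l f g : (forall x, In x l -> f x = g x) -> csum l f = csum l g.
Proof.
  induction l; intros H; simpl; auto.
  rewrite H by (left; auto). rewrite IHl; auto. intros; apply H; right; auto.
Qed.

Lemma csum_app l1 l2 f : csum (l1 ++ l2) f = (csum l1 f + csum l2 f)%C.
Proof. induction l1; simpl. - ring. - rewrite IHl1. ring. Qed.

Lemma csum_plus l f g : csum l (fun x => f x + g x)%C = (csum l f + csum l g)%C.
Proof. induction l; simpl. - ring. - rewrite IHl. ring. Qed.

Lemma csum_mult_l l c f : csum l (fun x => c * f x)%C = (c * csum l f)%C.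
Proof. induction l; simpl. - ring. - rewrite IHl. ring. Qed.

Lemma csum_mult_r l c f : csum l (fun x => f x * c)%C = (csum l f * c)%C.
Proof. induction l; simpl. - ring. - rewrite IHl. ring. Qed.

Lemma csum_zero l : csum l (fun _ => RtoC 0) = RtoC 0.
Proof. induction l; simpl. - ring. - rewrite IHl. ring. Qed.

Lemma csum_swap l1 l2 (f : nat -> nat -> C) :
  csum l1 (fun i => csum l2 (fun j => f i j)) = csum l2 (fun j => csum l1 (fun i => f i j)).
Proof.
  induction l1; simpl.
  - rewrite csum_zero. auto.
  - rewrite IHl1. rewrite <- csum_plus. auto.
Qed.

Lemma csum_conj l f : Cconj (csum l f) = csum l (fun x => Cconj (f x)).
Proof.
  induction l; simpl.
  - apply injective_projections; simpl; lra.
  - rewrite Cplus_conj, IHl. auto.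
Qed.

Lemma csum_real l f : csum l (fun x => RtoC (f x)) = RtoC (rsum l f).
Proof.
  induction l; simpl. - auto.
  - rewrite IHl. apply injective_projections; simpl; lra.
Qed.

Lemma Cmod_csum l f : Cmod (csum l f) <= rsum l (fun x => Cmod (f x)).
Proof.
  induction l; simpl.
  - rewrite Cmod_0. lra.
  - eapply Rle_trans. apply Cmod_triangle. lra.
Qed.

Lemma rsum_le l f g : (forall x, In x l -> f x <= g x) -> rsum l f <= rsum l g.
Proof.
  induction l; intros H; simpl. lra.
  assert (f a <= g a) by (apply H; left; auto).
  assert (rsum l f <= rsum l g) by (apply IHl; intros; apply H; right; auto). lra.
Qed.

Lemma rsum_nonneg l f : (forall x, In x l -> 0 <= f x) -> 0 <= rsum l f.
Proof.
  induction l; intros H; simpl. lra.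
  assert (0 <= f a) by (apply H; left; auto).
  assert (0 <= rsum l f) by (apply IHl; intros; apply H; right; auto). lra.
Qed.

Lemma rsum_plus l f g : rsum l (fun x => f x + g x) = rsum l f + rsum l g.
Proof. induction l; simpl. lra. rewrite IHl. lra. Qed.

Lemma rsum_scal l c f : rsum l (fun x => c * f x) = c * rsum l f.
Proof. induction l; simpl. lra. rewrite IHl. lra. Qed.

Lemma rsum_zero l : rsum l (fun _ => 0) = 0.
Proof. induction l; simpl. lra. rewrite IHl. lra. Qed.

Lemma rsum_swap l1 l2 (f : nat -> nat -> R) :
  rsum l1 (fun i => rsum l2 (fun j => f i j)) = rsum l2 (fun j => rsum l1 (fun i => f i j)).
Proof.
  induction l1; simpl.
  - rewrite rsum_zero. auto.
  - rewrite IHl1. rewrite <- rsum_plus. auto.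
Qed.

Lemma rsum_filter_le l (P : nat -> bool) f : (forall x, In x l -> 0 <= f x) ->
  rsum (filter P l) f <= rsum l f.
Proof.
  induction l; intros H; simpl. lra.
  assert (0 <= f a) by (apply H; left; auto).
  assert (rsum (filter P l) f <= rsum l f) by (apply IHl; intros; apply H; right; auto).
  destruct (P a); simpl; lra.
Qed.

Lemma rsum_ind l (P : nat -> bool) : rsum l (fun x => if P x then 1 else 0) = INR (length (filter P l)).
Proof.
  induction l; simpl. auto. rewrite IHl. destruct (P a); cbn [filter length]; try rewrite S_INR; lra.
Qed.

Lemma length_filter_imp l (P Q : nat -> bool) : (forall x, P x = true -> Q x = true) ->
  (length (filter P l) <= length (filter Q l))%nat.
Proof.
  intros H; induction l; simpl. lia.
  destruct (P a) eqn:E. rewrite (H a E). simpl; lia. destruct (Q a); simpl; lia.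
Qed.

Lemma e_add x y : e (x + y) = (e x * e y)%C.
Proof.
  unfold e, Cmult; simpl.
  replace (2 * PI * (x + y)) with (2 * PI * x + 2 * PI * y) by ring.
  rewrite cos_plus, sin_plus. apply injective_projections; simpl; ring.
Qed.

Lemma e_conj x : Cconj (e x) = e (- x).
Proof.
  unfold e, Cconj; simpl. replace (2 * PI * - x) with (- (2 * PI * x)) by ring.
  rewrite cos_neg, sin_neg. auto.
Qed.

Lemma e_int k : e (IZR k) = RtoC 1.
Proof.
  unfold e. assert (Hs : sin (IZR k * PI) = 0) by (apply sin_eq_0_1; eauto).
  replace (2 * PI * IZR k) with (2 * (IZR k * PI)) by ring.
  rewrite cos_2a_sin, sin_2a, Hs. apply injective_projections; simpl; ring.
Qed.

Lemma e_pow x n : (e x ^ n)%C = e (INR n * x).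
Proof.
  induction n; cbn [Cpow].
  - replace (INR 0 * x) with (IZR 0) by (simpl; ring). rewrite e_int. auto.
  - rewrite IHn, <- e_add. f_equal. rewrite S_INR. ring.
Qed.

Lemma geom (z : C) n : (csum (seq 0 n) (fun y => z ^ y) * (z - 1))%C = (z ^ n - 1)%C.
Proof.
  induction n.
  - simpl. ring.
  - rewrite seq_S, csum_app. simpl csum. rewrite Cmult_plus_distr_r, IHn. simpl. ring.
Qed.

Lemma csum_const l : csum l (fun _ => RtoC 1) = RtoC (INR (length l)).
Proof.
  induction l; simpl. auto. rewrite IHl. destruct (length l); simpl;
  apply injective_projections; simpl; try ring.
Qed.

Lemma e_ne1 (r : nat) (K : Z) : (0 < r)%nat -> (K mod Z.of_nat r <> 0)%Z ->
  e (IZR K / INR r) <> RtoC 1.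
Proof.
  intros Hr HK He. unfold e in He.
  assert (Hrp : 0 < INR r) by (apply lt_0_INR; auto).
  assert (Hs : sin (2 * PI * (IZR K / INR r)) = 0) by (apply (f_equal snd) in He; simpl in He; auto).
  assert (Hc : cos (2 * PI * (IZR K / INR r)) = 1) by (apply (f_equal fst) in He; simpl in He; auto).
  apply sin_eq_0_0 in Hs. destruct Hs as [j Hj].
  assert (Hj2 : 2 * IZR K = IZR j * INR r).
  { apply Rmult_eq_reg_l with PI. 2: apply PI_neq0.
    replace (PI * (2 * IZR K)) with (2 * PI * (IZR K / INR r) * INR r) by (field; lra).
    rewrite Hj. ring. }
  rewrite INR_IZR_INZ in Hj2. rewrite <- mult_IZR, <- mult_IZR in Hj2. apply eq_IZR in Hj2.
  rewrite Hj in Hc.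
  destruct (Z.Even_or_Odd j) as [[i Hi]|[i Hi]]; subst j.
  - apply HK. apply Z.mod_divide. lia. exists i. lia.
  - rewrite plus_IZR, mult_IZR in Hc.
    replace ((2 * IZR i + 1) * PI) with (2 * PI * IZR i + PI) in Hc by ring.
    rewrite neg_cos in Hc.
    assert (cos (2 * PI * IZR i) = 1) by (pose proof (e_int i) as E; unfold e in E; apply (f_equal fst) in E; simpl in E; auto).
    lra.
Qed.

Lemma orth (r : nat) (K : Z) : (0 < r)%nat ->
  csum (seq 0 r) (fun y => e (IZR K * INR y / INR r)) =
  if Z.eqb (K mod Z.of_nat r) 0 then RtoC (INR r) else RtoC 0.
Proof.
  intros Hr. assert (Hrp : 0 < INR r) by (apply lt_0_INR; auto).
  destruct (Z.eqb_spec (K mod Z.of_nat r) 0) as [H|H].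
  - apply Z.mod_divide in H; [|lia]. destruct H as [c Hc].
    rewrite (csum_ext _ _ (fun _ => RtoC 1)).
    + rewrite csum_const, seq_length. auto.
    + intros y _. subst K. rewrite mult_IZR, <- INR_IZR_INZ.
      replace (IZR c * INR r * INR y / INR r) with (IZR (c * Z.of_nat y)).
      apply e_int. rewrite mult_IZR, <- INR_IZR_INZ. field. lra.
  - set (z := e (IZR K / INR r)).
    rewrite (csum_ext _ _ (fun y => z ^ y)%C).
    + pose proof (geom z r) as G.
      assert (Zr : (z ^ r)%C = RtoC 1).
      { unfold z. rewrite e_pow. replace (INR r * (IZR K / INR r)) with (IZR K) by (field; lra).
        apply e_int. }
      rewrite Zr in G. replace (RtoC 1 - RtoC 1)%C with (RtoC 0) in G by ring.
      assert (Hz : (z - 1)%C <> RtoC 0).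
      { intro Hz. apply (e_ne1 r K Hr H). fold z.
        replace z with ((z - 1) + 1)%C by ring. rewrite Hz. ring. }
      apply Cmod_eq_0. apply (f_equal Cmod) in G. rewrite Cmod_mult, Cmod_0 in G.
      assert (0 < Cmod (z - 1)). { apply Rnot_le_lt. intro. apply Hz, Cmod_eq_0.
        pose proof (Cmod_ge_0 (z-1)). lra. }
      apply Rmult_integral in G. destruct G; lra.
    + intros y _. unfold z. rewrite e_pow. f_equal. field. lra.
Qed.
Definition cond (a r n n' : nat) : bool :=
  Z.eqb ((Z.of_nat (a*n) - Z.of_nat (a*n')) mod Z.of_nat r) 0.

Lemma Cmod_RtoC_nonneg x : 0 <= x -> Cmod (RtoC x) = x.
Proof. intros. rewrite Cmod_R. apply Rabs_pos_eq; auto. Qed.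

Lemma LS (r a N : nat) (c : nat -> C) : (0 < r)%nat ->
  rsum (seq 0 r) (fun y => Cmod (csum (seq 1 N) (fun n => (c n * e (INR (a*n*y) / INR r))%C)) ^ 2)
  <= INR r * rsum (seq 1 N) (fun n => rsum (seq 1 N) (fun n' =>
        if cond a r n n' then Cmod (c n) * Cmod (c n') else 0)).
Proof.
  intros Hr. assert (Hrp : 0 < INR r) by (apply lt_0_INR; auto).
  set (S y := csum (seq 1 N) (fun n => (c n * e (INR (a*n*y) / INR r))%C)).
  set (L := rsum (seq 0 r) (fun y => Cmod (S y) ^ 2)).
  assert (HL0 : 0 <= L) by (apply rsum_nonneg; intros; apply pow2_ge_0).
  assert (Step : RtoC L = csum (seq 1 N) (fun n => csum (seq 1 N) (fun n' =>
     (c n * Cconj (c n') * (if cond a r n n' then RtoC (INR r) else RtoC 0))%C))).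
  { unfold L. rewrite <- csum_real.
    rewrite (csum_ext _ _ (fun y => csum (seq 1 N) (fun n => csum (seq 1 N) (fun n' =>
        (c n * Cconj (c n') * e (IZR (Z.of_nat (a*n) - Z.of_nat (a*n')) * INR y / INR r))%C)))).
    - rewrite csum_swap. apply csum_ext. intros n _.
      rewrite csum_swap. apply csum_ext. intros n' _.
      rewrite csum_mult_l. rewrite orth by auto. unfold cond. auto.
    - intros y _. rewrite Cmod2_conj. unfold S at 2. rewrite csum_conj.
      rewrite <- csum_mult_l. rewrite csum_swap. apply csum_ext. intros n' _.
      unfold S. rewrite <- csum_mult_r. apply csum_ext. intros n _.
      rewrite Cmult_conj, e_conj.
      replace (IZR (Z.of_nat (a * n) - Z.of_nat (a * n')) * INR y / INR r) with
        (INR (a * n * y) / INR r + - (INR (a * n' * y) / INR r)).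
      + rewrite e_add. ring.
      + rewrite minus_IZR, <- !INR_IZR_INZ, !mult_INR. field. lra. }
  change (L <= INR r * rsum (seq 1 N) (fun n => rsum (seq 1 N) (fun n0 => if cond a r n n0 then Cmod (c n) * Cmod (c n0) else 0))).
  replace L with (Cmod (RtoC L)) by (apply Cmod_RtoC_nonneg; auto).
  rewrite Step. eapply Rle_trans. apply Cmod_csum.
  rewrite <- rsum_scal. apply rsum_le. intros n _.
  eapply Rle_trans. apply Cmod_csum.
  rewrite <- rsum_scal. apply rsum_le. intros n' _.
  rewrite !Cmod_mult, Cmod_conj.
  destruct (cond a r n n'). rewrite Cmod_RtoC_nonneg by lra. lra.
  rewrite Cmod_0. lra.
Qed.

Lemma rsum_ext l f g : (forall x, In x l -> f x = g x) -> rsum l f = rsum l g.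
Proof.
  induction l; intros H; simpl; auto.
  rewrite H by (left; auto). rewrite IHl; auto. intros; apply H; right; auto.
Qed.

Lemma rsum_scal_r l c f : rsum l (fun x => f x * c) = rsum l f * c.
Proof. induction l; simpl. lra. rewrite IHl. lra. Qed.


Lemma pair_bound l (P : nat -> nat -> bool) (u : nat -> R) C0 :
  (forall n, 0 <= u n) ->
  (forall n, In n l -> INR (length (filter (P n) l)) <= C0) ->
  (forall n', In n' l -> INR (length (filter (fun n => P n n') l)) <= C0) ->
  rsum l (fun n => rsum l (fun n' => if P n n' then u n * u n' else 0))
  <= C0 * rsum l (fun n => u n ^ 2).
Proof.
  intros Hu H1 H2.
  apply Rle_trans with (rsum l (fun n => rsum l (fun n' =>
     (if P n n' then 1 else 0) * (u n ^ 2 / 2) + (if P n n' then 1 else 0) * (u n' ^ 2 / 2)))).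
  { apply rsum_le; intros n _. apply rsum_le; intros n' _.
    pose proof (Hu n); pose proof (Hu n').
    pose proof (pow2_ge_0 (u n - u n')). destruct (P n n'); nra. }
  rewrite (rsum_ext l _ (fun n => rsum l (fun n' => (if P n n' then 1 else 0) * (u n ^ 2 / 2))
           + rsum l (fun n' => (if P n n' then 1 else 0) * (u n' ^ 2 / 2)))).
  2:{ intros; apply rsum_plus. }
  rewrite rsum_plus. rewrite (rsum_swap l l (fun n n' => (if P n n' then 1 else 0) * (u n' ^ 2 / 2))).
  assert (A : forall (Q : nat -> nat -> bool), (forall n, In n l -> INR (length (filter (Q n) l)) <= C0) ->
     rsum l (fun n => rsum l (fun n' => (if Q n n' then 1 else 0) * (u n ^ 2 / 2)))
     <= C0 / 2 * rsum l (fun n => u n ^ 2)).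
  { intros Q HQ. rewrite <- rsum_scal. apply rsum_le. intros n Hn.
    rewrite rsum_scal_r, rsum_ind. specialize (HQ n Hn).
    pose proof (pow2_ge_0 (u n)). assert (0 <= (C0 - INR (length (filter (Q n) l))) * u n ^ 2) by (apply Rmult_le_pos; lra). lra. }
  pose proof (A P H1).
  pose proof (A (fun n' n => P n n') H2) as H3. cbv beta in H3. lra.
Qed.

Lemma count_mod (q N n0 : nat) : (0 < q)%nat ->
  INR (length (filter (fun n' => Nat.eqb (n' mod q) (n0 mod q)) (seq 1 N))) <= INR N / INR q + 1.
Proof.
  intros Hq. set (F := filter _ _).
  assert (HND : NoDup (map (fun x => (x / q)%nat) F)).
  { apply NoDup_map_NoDup_ForallPairs.
    - intros x y Hx Hy Hxy. unfold F in Hx, Hy. apply filter_In in Hx, Hy.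
      destruct Hx as [_ Hx]; destruct Hy as [_ Hy]. apply Nat.eqb_eq in Hx, Hy.
      rewrite (Nat.div_mod_eq x q), (Nat.div_mod_eq y q). lia.
    - apply NoDup_filter, seq_NoDup. }
  assert (Hinc : incl (map (fun x => (x / q)%nat) F) (seq 0 (N / q + 1))).
  { intros z Hz. apply in_map_iff in Hz. destruct Hz as [x [Hx1 Hx2]].
    unfold F in Hx2. apply filter_In in Hx2. destruct Hx2 as [Hx2 _]. apply in_seq in Hx2.
    apply in_seq. subst z. split. lia. assert (x / q <= N / q)%nat by (apply Nat.div_le_mono; lia). lia. }
  pose proof (NoDup_incl_length HND Hinc) as HL. rewrite length_map, length_seq in HL.
  apply le_INR in HL. rewrite plus_INR in HL. simpl in HL.
  assert (INR (N / q) <= INR N / INR q).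
  { assert (Hqr : 0 < INR q) by (apply lt_0_INR; lia).
    apply Rmult_le_reg_r with (INR q); auto. unfold Rdiv. rewrite Rmult_assoc, Rinv_l by lra.
    rewrite Rmult_1_r, <- mult_INR. apply le_INR. rewrite Nat.mul_comm. apply Nat.mul_div_le. lia. }
  lra.
Qed.

Lemma cond_imp (a r n n' : nat) : (0 < r)%nat -> cond a r n n' = true ->
  let q := (r / Nat.gcd r a)%nat in Nat.eqb (n' mod q) (n mod q) = true /\ Nat.eqb (n mod q) (n' mod q) = true.
Proof.
  intros Hr Hc q.
  set (g := Nat.gcd r a).
  assert (Hg0 : g <> 0%nat) by (unfold g; intro H; apply Nat.gcd_eq_0 in H; lia).
  assert (Hgr : Nat.divide g r) by apply Nat.gcd_divide_l.
  assert (Hga : Nat.divide g a) by apply Nat.gcd_divide_r.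
  destruct Hgr as [q' Hq']. destruct Hga as [a' Ha'].
  assert (Hqq : q = q') by (unfold q; fold g; rewrite Hq'; apply Nat.div_mul; auto).
  assert (Haa : (a / g)%nat = a') by (rewrite Ha'; apply Nat.div_mul; auto).
  assert (Hcop : Nat.gcd q a' = 1%nat).
  { rewrite <- Haa. unfold q. apply Nat.gcd_div_gcd; auto. }
  rewrite <- Hqq in Hq'. assert (Hq0 : (0 < q)%nat) by (destruct q; lia).
  unfold cond in Hc. apply Z.eqb_eq in Hc. apply Z.mod_divide in Hc; [|lia].
  assert (Hd : (Z.of_nat q | Z.of_nat n - Z.of_nat n')%Z).
  { assert (Hd1 : (Z.of_nat q | Z.of_nat a' * (Z.of_nat n - Z.of_nat n'))%Z).
    { apply (Z.mul_divide_cancel_l _ _ (Z.of_nat g)). lia.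
      replace (Z.of_nat g * Z.of_nat q)%Z with (Z.of_nat r) by lia.
      replace (Z.of_nat g * (Z.of_nat a' * (Z.of_nat n - Z.of_nat n')))%Z
        with (Z.of_nat (a * n) - Z.of_nat (a * n'))%Z by (rewrite Ha'; lia). auto. }
    destruct (Nat.gcd_bezout_pos q a' Hq0) as [u [v Huv]]. rewrite Hcop in Huv.
    set (k := (Z.of_nat n - Z.of_nat n')%Z) in *.
    replace k with (Z.of_nat u * k * Z.of_nat q - Z.of_nat v * (Z.of_nat a' * k))%Z.
    - apply Z.divide_sub_r. apply Z.divide_factor_r. apply Z.divide_mul_r. auto.
    - assert (Z.of_nat u * Z.of_nat q = Z.of_nat v * Z.of_nat a' + 1)%Z by lia. nia. }
  destruct Hd as [k Hk].
  assert (E : (Z.of_nat n mod Z.of_nat q = Z.of_nat n' mod Z.of_nat q)%Z).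
  { replace (Z.of_nat n) with (Z.of_nat n' + k * Z.of_nat q)%Z by lia. apply Z.mod_add. lia. }
  rewrite <- !Nat2Z.inj_mod in E. apply Nat2Z.inj in E. rewrite E. rewrite Nat.eqb_refl. auto.
Qed.
Lemma LS_bound (r a N : nat) (c : nat -> C) (G : R) : (0 < r)%nat ->
  INR (Nat.gcd r a) <= G ->
  rsum (seq 0 r) (fun y => Cmod (csum (seq 1 N) (fun n => (c n * e (INR (a*n*y) / INR r))%C)) ^ 2)
  <= INR r * (INR N * G / INR r + 1) * rsum (seq 1 N) (fun n => Cmod (c n) ^ 2).
Proof.
  intros Hr HG. eapply Rle_trans. apply LS; auto.
  rewrite Rmult_assoc. apply Rmult_le_compat_l. apply pos_INR.
  set (g := Nat.gcd r a). set (q := (r / g)%nat).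
  assert (Hg0 : g <> 0%nat) by (unfold g; intro H; apply Nat.gcd_eq_0 in H; lia).
  assert (Hgr : (r = g * q)%nat).
  { unfold q. destruct (Nat.gcd_divide_l r a) as [k Hk]. fold g in Hk.
    rewrite Hk at 2. rewrite Nat.div_mul by auto. lia. }
  assert (Hq0 : (0 < q)%nat) by (destruct q; lia).
  assert (HC : INR N / INR q + 1 <= INR N * G / INR r + 1).
  { rewrite Hgr, mult_INR. assert (0 < INR q) by (apply lt_0_INR; lia).
    assert (0 < INR g) by (apply lt_0_INR; lia). assert (0 <= INR N) by apply pos_INR.
    apply Rplus_le_compat_r. unfold Rdiv. rewrite Rinv_mult.
    replace (INR N * G * (/ INR g * / INR q)) with (INR N * / INR q * (G / INR g)) by (field; lra).
    rewrite <- (Rmult_1_r (INR N * / INR q)) at 1. apply Rmult_le_compat_l.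
    apply Rmult_le_pos; auto. left; apply Rinv_0_lt_compat; auto.
    apply Rmult_le_reg_r with (INR g); auto. unfold Rdiv. rewrite Rmult_assoc, Rinv_l by lra. fold g in HG. lra. }
  apply pair_bound.
  - intros; apply Cmod_ge_0.
  - intros n _. eapply Rle_trans. 2: apply HC. eapply Rle_trans. 2: apply (count_mod q N n Hq0).
    apply le_INR, length_filter_imp. intros x Hx. apply (cond_imp a r n x Hr Hx).
  - intros n' _. eapply Rle_trans. 2: apply HC. eapply Rle_trans. 2: apply (count_mod q N n' Hq0).
    apply le_INR, length_filter_imp. intros x Hx. apply (cond_imp a r x n' Hr Hx).
Qed.

Lemma rsum_partition l (P : nat -> bool) g :
  rsum l g = rsum (filter P l) g + rsum (filter (fun x => negb (P x)) l) g.
Proof. induction l; simpl. lra. destruct (P a); simpl; unfold rsum in *; simpl; lra. Qed.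

Lemma subset_sum (l2 l1 : list nat) g : (forall x, 0 <= g x) -> NoDup l1 -> incl l1 l2 ->
  rsum l1 g <= rsum l2 g.
Proof.
  intros Hg. revert l1. induction l2 as [|a l2 IH]; intros l1 Hnd Hinc.
  - destruct l1. simpl; lra. exfalso. apply (Hinc n). left; auto.
  - rewrite (rsum_partition l1 (fun x => Nat.eqb x a)). simpl rsum at 3.
    assert (H1 : rsum (filter (fun x => Nat.eqb x a) l1) g <= g a).
    { assert (Hall : forall x, In x (filter (fun x => Nat.eqb x a) l1) -> x = a).
      { intros x Hx. apply filter_In in Hx. destruct Hx as [_ Hx]. apply Nat.eqb_eq; auto. }
      assert (Hnd2 : NoDup (filter (fun x => Nat.eqb x a) l1)) by (apply NoDup_filter; auto).
      destruct (filter (fun x => Nat.eqb x a) l1) as [|b [|c l]] eqn:E.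
      + simpl. pose proof (Hg a). lra.
      + simpl. rewrite (Hall b) by (left; auto). lra.
      + exfalso. rewrite (Hall b), (Hall c) in Hnd2 by (simpl; auto). inversion Hnd2. apply H1. left; auto. }
    assert (H2 : rsum (filter (fun x => negb (Nat.eqb x a)) l1) g <= rsum l2 g).
    { apply IH. apply NoDup_filter; auto.
      intros x Hx. apply filter_In in Hx. destruct Hx as [Hx1 Hx2].
      destruct (Hinc x Hx1) as [E|E]; auto. subst. rewrite Nat.eqb_refl in Hx2. discriminate. }
    lra.
Qed.

Lemma rsum_map l f g : rsum (map f l) g = rsum l (fun x => g (f x)).
Proof. induction l; simpl; auto. rewrite IHl; auto. Qed.

Lemma modinv_lt x r : (0 < r)%nat -> (modinv x r < r)%nat.
Proof.
  intros Hr. unfold modinv.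
  destruct (filter _ (seq 0 r)) eqn:E; simpl. auto.
  assert (In n (filter (fun y => Nat.eqb ((x * y) mod r) (1 mod r)) (seq 0 r))) by (rewrite E; left; auto).
  apply filter_In in H. destruct H as [H _]. apply in_seq in H. lia.
Qed.

Lemma modinv_spec x r : (1 < r)%nat -> Nat.gcd x r = 1%nat ->
  ((x * modinv x r) mod r = 1 mod r)%nat.
Proof.
  intros Hr Hg.
  assert (Hx : (0 < x)%nat).
  { destruct x. rewrite Nat.gcd_0_l in Hg. lia. lia. }
  destruct (Nat.gcd_bezout_pos x r Hx) as [u [v Huv]]. rewrite Hg in Huv.
  assert (Hin : In ((u mod r)%nat) (filter (fun y => Nat.eqb ((x * y) mod r) (1 mod r)) (seq 0 r))).
  { apply filter_In. split. apply in_seq. pose proof (Nat.mod_upper_bound u r). lia.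
    apply Nat.eqb_eq. rewrite Nat.mul_mod_idemp_r by lia. rewrite Nat.mul_comm, Huv.
    rewrite Nat.Div0.mod_add. auto. }
  unfold modinv. destruct (filter _ (seq 0 r)) eqn:E. inversion Hin.
  simpl. assert (In n (filter (fun y => Nat.eqb ((x * y) mod r) (1 mod r)) (seq 0 r))) by (rewrite E; left; auto).
  apply filter_In in H. destruct H as [_ H]. apply Nat.eqb_eq; auto.
Qed.

Lemma modinv_inj x1 x2 r : (1 < r)%nat -> Nat.gcd x1 r = 1%nat -> Nat.gcd x2 r = 1%nat ->
  (x1 < r)%nat -> (x2 < r)%nat -> modinv x1 r = modinv x2 r -> x1 = x2.
Proof.
  intros Hr H1 H2 L1 L2 E.
  pose proof (modinv_spec x1 r Hr H1) as S1. pose proof (modinv_spec x2 r Hr H2) as S2.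
  rewrite E in S1. set (y := modinv x2 r) in *.
  assert (A : ((x1 * (x2 * y)) mod r = x1 mod r)%nat).
  { rewrite <- Nat.mul_mod_idemp_r by lia. rewrite S2. rewrite Nat.mul_mod_idemp_r by lia. rewrite Nat.mul_1_r. auto. }
  assert (B : ((x2 * (x1 * y)) mod r = x2 mod r)%nat).
  { rewrite <- Nat.mul_mod_idemp_r by lia. rewrite S1. rewrite Nat.mul_mod_idemp_r by lia. rewrite Nat.mul_1_r. auto. }
  replace (x2 * (x1 * y))%nat with (x1 * (x2 * y))%nat in B by ring.
  rewrite A in B. rewrite !Nat.mod_small in B by auto. auto.
Qed.

Definition units (r : nat) := filter (fun x => Nat.eqb (Nat.gcd x r) 1) (seq 0 r).

Lemma units_inv_sum r g : (1 < r)%nat -> (forall x, 0 <= g x) ->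
  rsum (units r) (fun x => g (modinv x r)) <= rsum (seq 0 r) g.
Proof.
  intros Hr Hg. rewrite <- rsum_map. apply subset_sum; auto.
  - apply NoDup_map_NoDup_ForallPairs.
    + intros x y Hx Hy Hxy. unfold units in Hx, Hy. apply filter_In in Hx, Hy.
      destruct Hx as [Hx1 Hx2]; destruct Hy as [Hy1 Hy2]. apply in_seq in Hx1, Hy1.
      apply Nat.eqb_eq in Hx2, Hy2. apply (modinv_inj x y r); auto; lia.
    + apply NoDup_filter, seq_NoDup.
  - intros z Hz. apply in_map_iff in Hz. destruct Hz as [x [Hx _]]. subst.
    apply in_seq. pose proof (modinv_lt x r). lia.
Qed.
Lemma rsum_const l c : rsum l (fun _ => c) = INR (length l) * c.
Proof. induction l; simpl rsum; simpl length. simpl; lra. rewrite IHl, S_INR. lra. Qed.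

Lemma amgm t u v : 0 < t -> u * v <= t / 2 * u ^ 2 + / (2 * t) * v ^ 2.
Proof.
  intros Ht. apply Rmult_le_reg_l with (2 * t); [lra|].
  replace (2 * t * (t / 2 * u ^ 2 + / (2 * t) * v ^ 2)) with (t * t * u ^ 2 + v ^ 2) by (field; lra).
  pose proof (pow2_ge_0 (t * u - v)). nra.
Qed.

Lemma opt_t S X Y : 0 < X -> 0 < Y -> (forall t, 0 < t -> S <= t / 2 * X + / (2 * t) * Y) ->
  S <= sqrt X * sqrt Y.
Proof.
  intros HX HY H. set (a := sqrt X). set (b := sqrt Y).
  assert (Ha : 0 < a) by (apply sqrt_lt_R0; auto). assert (Hb : 0 < b) by (apply sqrt_lt_R0; auto).
  assert (EX : X = a * a) by (unfold a; rewrite sqrt_sqrt; lra).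
  assert (EY : Y = b * b) by (unfold b; rewrite sqrt_sqrt; lra).
  specialize (H (b / a)). rewrite EX, EY in H.
  replace (b / a / 2 * (a * a) + / (2 * (b / a)) * (b * b)) with (a * b) in H by (field; lra).
  apply H. apply Rdiv_lt_0_compat; auto.
Qed.

Lemma min_div_prop r f (P : R -> Prop) : P (f 1%nat) ->
  (forall s, In s (divisors r) -> P (f s)) -> P (min_div r f).
Proof.
  intros H1 H2. unfold min_div. induction (divisors r) as [|a l IH]; simpl. auto.
  destruct (Rle_dec (f a) (fold_right Rmin (f 1%nat) (map f l))).
  - rewrite Rmin_left by auto. apply H2. left; auto.
  - rewrite Rmin_right by lra. apply IH. intros; apply H2; right; auto.
Qed.

Lemma Rpower_half_sq x a : 0 < x -> Rpower x a * Rpower x a = Rpower x (2 * a).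
Proof. intros. rewrite <- Rpower_plus. f_equal. ring. Qed.

Lemma sq_ge x y : 0 <= x -> 0 <= y -> y * y <= x * x -> y <= x.
Proof. intros. nra. Qed.

Lemma F_prop (M N r s : R) : 1 <= M -> 1 <= N -> 1 <= r -> 1 <= s ->
  let f := Rpower (r / N) (1/2) + Rpower (s / r) (1/4) + Rpower (r / (M ^ 2 * s)) (1/4) in
  0 <= f /\ (M + r) * (N + r) <= 4 * r * M * N * (f * f).
Proof.
  intros HM HN Hr Hs f.
  set (A := Rpower (r / N) (1/2)). set (B := Rpower (s / r) (1/4)). set (C := Rpower (r / (M ^ 2 * s)) (1/4)).
  assert (HA : 0 < A) by (apply exp_pos). assert (HB : 0 < B) by (apply exp_pos).
  assert (HC : 0 < C) by (apply exp_pos).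
  assert (EA : A * A = r / N).
  { unfold A. rewrite Rpower_half_sq. replace (2 * (1/2)) with 1 by field. apply Rpower_1.
    apply Rdiv_lt_0_compat; lra. apply Rdiv_lt_0_compat; lra. }
  set (b := B * B). set (c := C * C).
  assert (Eb : b * b = s / r).
  { unfold b, B. rewrite Rpower_half_sq by (apply Rdiv_lt_0_compat; lra).
    rewrite Rpower_half_sq by (apply Rdiv_lt_0_compat; nra). replace (2 * (2 * (1/4))) with 1 by field. apply Rpower_1. apply Rdiv_lt_0_compat; lra. }
  assert (Ec : c * c = r / (M ^ 2 * s)).
  { unfold c, C. rewrite Rpower_half_sq by (apply Rdiv_lt_0_compat; nra).
    rewrite Rpower_half_sq by (apply Rdiv_lt_0_compat; nra). replace (2 * (2 * (1/4))) with 1 by field. apply Rpower_1. apply Rdiv_lt_0_compat; nra. }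
  assert (Hb0 : 0 <= b) by (unfold b; nra). assert (Hc0 : 0 <= c) by (unfold c; nra).
  assert (Hb1 : 1 / r <= b).
  { apply sq_ge; auto. left; apply Rdiv_lt_0_compat; lra. rewrite Eb.
    apply Rle_trans with (1 / r). 
    - apply Rmult_le_reg_l with (r * r); [nra|]. field_simplify; lra.
    - unfold Rdiv. apply Rmult_le_compat_r. left; apply Rinv_0_lt_compat; lra. lra. }
  assert (Hbc : 1 / M <= b \/ 1 / M <= c).
  { destruct (Rle_dec r (s * M ^ 2)).
    - left. apply sq_ge; auto. left; apply Rdiv_lt_0_compat; lra. rewrite Eb.
      apply Rmult_le_reg_l with (r * M * M); [nra|]. field_simplify; nra.
    - right. assert (1 <= c).
      { apply sq_ge; auto. lra. rewrite Ec. apply Rmult_le_reg_l with (M ^ 2 * s); [nra|].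
        field_simplify; nra. }
      apply Rle_trans with 1; auto. apply Rmult_le_reg_l with M; [lra|]. field_simplify; lra. }
  split. unfold f; fold A B C; lra.
  assert (Hff : A * A + b + c <= f * f) by (unfold f, b, c; fold A B C; nra).
  assert (K1 : (M + r) * (N + r) = M * N + r * M + r * N + r * r) by ring.
  assert (K2 : 4 * r * M * N * (A * A) = 4 * r * r * M) by (rewrite EA; field; lra).
  assert (K3 : M * N + r * N <= 4 * r * M * N * (b + c)).
  { assert (Hm : 1 / M <= b + c) by (destruct Hbc; lra).
    assert (Hr' : 1 / r <= b + c) by lra.
    assert (P0 : 0 <= r * M * N) by nra.
    assert (E1 : r * M * N * (1 / M) = r * N) by (field; lra).
    assert (E2 : r * M * N * (1 / r) = M * N) by (field; lra).
    assert (r * M * N * (1 / M) <= r * M * N * (b + c)) by (apply Rmult_le_compat_l; auto).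
    assert (r * M * N * (1 / r) <= r * M * N * (b + c)) by (apply Rmult_le_compat_l; auto).
    nra. }
  assert (K4 : r * M + r * r <= 4 * r * r * M).
  { assert (0 <= (r-1)*(r*M)) by (apply Rmult_le_pos; nra).
    assert (0 <= (M-1)*(r*r)) by (apply Rmult_le_pos; nra). nra. }
  assert (0 <= 4 * r * M * N) by nra.
  assert (4 * r * M * N * (A * A + b + c) <= 4 * r * M * N * (f * f)) by (apply Rmult_le_compat_l; auto).
  nra.
Qed.
Lemma kl_decomp (l d m n r : nat) : kloosterman (l*d*m) n r =
  csum (units r) (fun x => (e (INR (l*d*m*x) / INR r) * e (INR (1*n*modinv x r) / INR r))%C).
Proof.
  unfold kloosterman, units. apply csum_ext. intros x _. rewrite <- e_add. f_equal.
  rewrite plus_INR, Nat.mul_1_l. unfold Rdiv; ring.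
Qed.

Lemma bilin_decomp l d M N r alpha beta :
  bilinB l d M N r alpha beta =
  (csum (units r) (fun x => csum (seq 1 M) (fun m => alpha m * e (INR (l*d*m*x) / INR r)) *
      csum (seq 1 N) (fun n => beta n * e (INR (1*n*modinv x r) / INR r))) / RtoC (sqrt (INR r)))%C.
Proof.
  unfold bilinB, Cdiv.
  set (T := fun m n x => (alpha m * e (INR (l*d*m*x) / INR r) * (beta n * e (INR (1*n*modinv x r) / INR r)))%C).
  transitivity (csum (seq 1 M) (fun m => csum (seq 1 N) (fun n => csum (units r) (fun x => T m n x))) * / RtoC (sqrt (INR r)))%C.
  - rewrite <- csum_mult_r. apply csum_ext. intros m _. rewrite <- csum_mult_r. apply csum_ext. intros n _.
    rewrite kl_decomp. rewrite Cmult_assoc. f_equal. rewrite <- csum_mult_l. apply csum_ext. intros x _.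
    unfold T. ring.
  - f_equal. symmetry. rewrite (csum_ext (units r) _ (fun x => csum (seq 1 M) (fun m => csum (seq 1 N) (fun n => T m n x)))).
    + rewrite csum_swap. apply csum_ext. intros m _. rewrite csum_swap. auto.
    + intros x _. rewrite <- csum_mult_r. apply csum_ext. intros m _. rewrite <- csum_mult_l. auto.
Qed.

Theorem mainTheorem12 :
  forall (p : nat), prime (Z.of_nat p) ->
  forall (Calpha Cbeta : R -> R) (eps : R), 0 < eps ->
  exists K : R, forall (h' l d M N : nat) (alpha beta : nat -> C),
    (1 <= h')%nat ->
    (1 <= l)%nat -> Nat.gcd l (p ^ h') = 1%nat ->
    (d = 1%nat \/ d = p \/ d = (p ^ 2)%nat) ->
    (1 <= M)%nat -> (1 <= N)%nat ->
    (forall eps', 0 < eps' -> forall m, (1 <= m <= M)%nat ->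
        Cmod (alpha m) <= Calpha eps' * Rpower (INR m) eps') ->
    (forall eps', 0 < eps' -> forall n, (1 <= n <= N)%nat ->
        Cmod (beta n) <= Cbeta eps' * Rpower (INR n) eps') ->
    let r := (p ^ h')%nat in
    Cmod (bilinB l d M N r alpha beta) <=
      K * Rpower (INR M * INR N * INR r) eps * INR M * INR N *
      min_div r (fun s =>
        Rpower (INR r / INR N) (1/2)
        + Rpower (INR s / INR r) (1/4)
        + Rpower (INR r / (INR M ^ 2 * INR s)) (1/4)).
Proof.
  intros p Hp Calpha Cbeta eps Heps.
  set (Ca := Rabs (Calpha eps) + 1). set (Cb := Rabs (Cbeta eps) + 1).
  assert (HCa : 1 <= Ca) by (unfold Ca; pose proof (Rabs_pos (Calpha eps)); lra).
  assert (HCb : 1 <= Cb) by (unfold Cb; pose proof (Rabs_pos (Cbeta eps)); lra).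
  exists (2 * INR p * Ca * Cb).
  intros h' l d M N alpha beta Hh Hl Hlr Hd HM HN Ha Hb r.
  assert (Hp2 : (2 <= p)%nat).
  { apply prime_ge_2 in Hp. lia. }
  assert (Hr1 : (1 < r)%nat).
  { unfold r. assert (p ^ 1 <= p ^ h')%nat by (apply Nat.pow_le_mono_r; lia). rewrite Nat.pow_1_r in H. lia. }
  assert (Hr0 : (0 < r)%nat) by lia.
  set (Mr := INR M). set (Nr := INR N). set (rr := INR r). set (pr := INR p).
  set (PM := Rpower Mr eps). set (PN := Rpower Nr eps).
  assert (HMr : 1 <= Mr) by (unfold Mr; apply (le_INR 1); lia).
  assert (HNr : 1 <= Nr) by (unfold Nr; apply (le_INR 1); lia).
  assert (Hrr : 1 <= rr) by (unfold rr; apply (le_INR 1); lia).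
  assert (Hpr : 2 <= pr) by (unfold pr; apply (le_INR 2); lia).
  assert (HPM : 0 < PM) by apply exp_pos. assert (HPN : 0 < PN) by apply exp_pos.
  assert (HaM : forall m, In m (seq 1 M) -> Cmod (alpha m) <= Ca * PM).
  { intros m Hm. apply in_seq in Hm. specialize (Ha eps Heps m ltac:(lia)).
    assert (0 < Rpower (INR m) eps) by apply exp_pos.
    assert (Rpower (INR m) eps <= PM).
    { apply Rle_Rpower_l. lra. split. apply lt_0_INR; lia. apply le_INR; lia. }
    assert (Calpha eps <= Rabs (Calpha eps)) by apply Rle_abs.
    pose proof (Rabs_pos (Calpha eps)). unfold Ca. nra. }
  assert (HbN : forall n, In n (seq 1 N) -> Cmod (beta n) <= Cb * PN).
  { intros n Hn. apply in_seq in Hn. specialize (Hb eps Heps n ltac:(lia)).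
    assert (0 < Rpower (INR n) eps) by apply exp_pos.
    assert (Rpower (INR n) eps <= PN).
    { apply Rle_Rpower_l. lra. split. apply lt_0_INR; lia. apply le_INR; lia. }
    assert (Cbeta eps <= Rabs (Cbeta eps)) by apply Rle_abs.
    pose proof (Rabs_pos (Cbeta eps)). unfold Cb. nra. }
  assert (SA : rsum (seq 1 M) (fun m => Cmod (alpha m) ^ 2) <= Mr * (Ca * PM) ^ 2).
  { replace Mr with (INR (length (seq 1 M))) by (rewrite length_seq; auto). rewrite <- rsum_const. apply rsum_le. intros m Hm.
    specialize (HaM m Hm). pose proof (Cmod_ge_0 (alpha m)). nra. }
  assert (SB : rsum (seq 1 N) (fun n => Cmod (beta n) ^ 2) <= Nr * (Cb * PN) ^ 2).
  { replace Nr with (INR (length (seq 1 N))) by (rewrite length_seq; auto). rewrite <- rsum_const. apply rsum_le. intros n Hn.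
    specialize (HbN n Hn). pose proof (Cmod_ge_0 (beta n)). nra. }
  assert (Hg : INR (Nat.gcd r (l * d)) <= pr ^ 2).
  { set (g := Nat.gcd r (l * d)).
    assert (Hgl : Nat.gcd g l = 1%nat).
    { assert (Nat.divide (Nat.gcd g l) (Nat.gcd l r)).
      { apply Nat.gcd_greatest. apply Nat.gcd_divide_r.
        apply Nat.divide_trans with g. apply Nat.gcd_divide_l. apply Nat.gcd_divide_l. }
      fold r in Hlr. rewrite Hlr in H. apply Nat.divide_1_r in H. auto. }
    assert (Hgd : Nat.divide g d).
    { apply Nat.gauss with l; auto. apply Nat.gcd_divide_r. }
    assert (Hd0 : (0 < d)%nat) by (destruct Hd as [->|[->| ->]]; try lia; rewrite Nat.pow_2_r; nia).
    assert (Hgle : (g <= d)%nat) by (apply Nat.divide_pos_le; auto).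
    apply Rle_trans with (INR d). apply le_INR; auto.
    unfold pr. rewrite <- pow_INR. apply le_INR.
    destruct Hd as [->|[->| ->]]; try lia; rewrite Nat.pow_2_r; nia. }
  set (A := fun x => csum (seq 1 M) (fun m => (alpha m * e (INR (l*d*m*x) / INR r))%C)).
  set (Bt := fun y => csum (seq 1 N) (fun n => (beta n * e (INR (1*n*y) / INR r))%C)).
  set (X := rr * (Mr * pr ^ 2 / rr + 1) * (Mr * (Ca * PM) ^ 2)).
  set (Y := rr * (Nr * 1 / rr + 1) * (Nr * (Cb * PN) ^ 2)).
  assert (XA : rsum (units r) (fun x => Cmod (A x) ^ 2) <= X).
  { apply Rle_trans with (rsum (seq 0 r) (fun x => Cmod (A x) ^ 2)).
    apply rsum_filter_le. intros; apply pow2_ge_0.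
    eapply Rle_trans. apply (LS_bound r (l*d) M alpha (pr ^ 2) Hr0 Hg).
    unfold X. apply Rmult_le_compat_l; [|exact SA].
    assert (0 <= Mr * pr^2 / rr) by (apply Rmult_le_pos; [nra| left; apply Rinv_0_lt_compat; lra]).
    apply Rmult_le_pos; lra. }
  assert (YB : rsum (units r) (fun x => Cmod (Bt (modinv x r)) ^ 2) <= Y).
  { eapply Rle_trans. apply (units_inv_sum r (fun y => Cmod (Bt y) ^ 2) Hr1). intros; apply pow2_ge_0.
    eapply Rle_trans. apply (LS_bound r 1 N beta 1 Hr0). rewrite (Nat.divide_1_r _ (Nat.gcd_divide_r r 1)). simpl; lra.
    unfold Y. apply Rmult_le_compat_l; [|exact SB].
    assert (0 <= Nr * 1 / rr) by (apply Rmult_le_pos; [nra| left; apply Rinv_0_lt_compat; lra]).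
    apply Rmult_le_pos; lra. }
  assert (HX : 0 < X).
  { unfold X. assert (0 < Mr * pr ^ 2 / rr) by (apply Rdiv_lt_0_compat; nra).
    assert (0 < Mr * (Ca * PM) ^ 2) by (apply Rmult_lt_0_compat; [lra|]; apply pow_lt; nra).
    apply Rmult_lt_0_compat; [|auto]. apply Rmult_lt_0_compat; lra. }
  assert (HY : 0 < Y).
  { unfold Y. assert (0 < Nr * 1 / rr) by (apply Rdiv_lt_0_compat; nra).
    assert (0 < Nr * (Cb * PN) ^ 2) by (apply Rmult_lt_0_compat; [lra|]; apply pow_lt; nra).
    apply Rmult_lt_0_compat; [|auto]. apply Rmult_lt_0_compat; lra. }
  assert (Hsum : Cmod (csum (units r) (fun x => (A x * Bt (modinv x r))%C)) <= sqrt X * sqrt Y).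
  { eapply Rle_trans. apply Cmod_csum. apply opt_t; auto. intros t Ht.
    apply Rle_trans with (rsum (units r) (fun x => t / 2 * Cmod (A x) ^ 2 + / (2 * t) * Cmod (Bt (modinv x r)) ^ 2)).
    - apply rsum_le. intros x _. rewrite Cmod_mult. apply amgm; auto.
    - rewrite rsum_plus, !rsum_scal.
      assert (0 < / (2 * t)) by (apply Rinv_0_lt_compat; lra).
      apply Rplus_le_compat; apply Rmult_le_compat_l; auto; lra. }
  assert (Hsr : 0 < sqrt rr) by (apply sqrt_lt_R0; lra).
  assert (HB : Cmod (bilinB l d M N r alpha beta) <= sqrt X * sqrt Y / sqrt rr).
  { rewrite bilin_decomp. rewrite Cmod_div.
    2:{ intro H. apply (f_equal fst) in H. simpl in H. fold rr in H. lra. }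
    rewrite Cmod_R, Rabs_pos_eq by apply sqrt_pos. fold rr.
    apply Rmult_le_compat_r. left; apply Rinv_0_lt_compat; auto. apply Hsum. }
  eapply Rle_trans. apply HB.
  set (F := min_div r _).
  assert (HF : 0 <= F /\ (Mr + rr) * (Nr + rr) <= 4 * rr * Mr * Nr * (F * F)).
  { apply min_div_prop.
    - apply F_prop; auto. rewrite INR_1; lra.
    - intros s Hs. unfold divisors in Hs. apply filter_In in Hs. destruct Hs as [Hs _].
      apply in_seq in Hs. apply F_prop; auto. apply (le_INR 1); lia. }
  destruct HF as [HF0 HF].
  set (Pall := Rpower (Mr * Nr * rr) eps).
  assert (HPall : PM * PN <= Pall).
  { assert (E : Pall = PM * PN * Rpower rr eps).
    { unfold Pall, PM, PN. rewrite Rpower_mult_distr by lra. rewrite Rpower_mult_distr by nra. auto. }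
    assert (1 <= Rpower rr eps).
    { rewrite <- (Rpower_O rr) by lra. apply Rle_Rpower; lra. }
    rewrite E. assert (0 < PM * PN) by nra. nra. }
  assert (Hrhs : 0 <= 2 * pr * Ca * Cb * Pall * Mr * Nr * F).
  { assert (0 < Pall) by apply exp_pos.
    repeat apply Rmult_le_pos; lra. }
  replace (sqrt X * sqrt Y / sqrt rr) with (sqrt (X * Y / rr)).
  2:{ rewrite sqrt_div_alt by lra. rewrite sqrt_mult by lra. auto. }
  rewrite <- (sqrt_square (2 * pr * Ca * Cb * Pall * Mr * Nr * F)) by auto.
  apply sqrt_le_1_alt.
  assert (E : X * Y / rr = (Mr * pr ^ 2 + rr) * (Nr + rr) / rr * (Mr * Nr) * (Ca * Cb) ^ 2 * (PM * PN) ^ 2).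
  { unfold X, Y. field. lra. }
  rewrite E.
  assert (E2 : 2 * pr * Ca * Cb * Pall * Mr * Nr * F * (2 * pr * Ca * Cb * Pall * Mr * Nr * F)
     = pr ^ 2 * (4 * rr * Mr * Nr * (F * F)) / rr * (Mr * Nr) * (Ca * Cb) ^ 2 * Pall ^ 2).
  { field. lra. }
  rewrite E2.
  assert (Q1 : (Mr * pr ^ 2 + rr) * (Nr + rr) <= pr ^ 2 * (4 * rr * Mr * Nr * (F * F))).
  { apply Rle_trans with (pr ^ 2 * ((Mr + rr) * (Nr + rr))).
    - assert (0 <= (pr ^ 2 - 1) * rr * (Nr + rr)) by (repeat apply Rmult_le_pos; nra). nra.
    - apply Rmult_le_compat_l; auto. nra. }
  assert (Q2 : 0 <= (PM * PN) ^ 2 /\ (PM * PN) ^ 2 <= Pall ^ 2).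
  { split. nra. apply pow_incr. nra. }
  assert (Q3 : 0 < (Mr * Nr) * (Ca * Cb) ^ 2 / rr).
  { apply Rdiv_lt_0_compat; [|lra]. apply Rmult_lt_0_compat. nra. apply pow_lt; nra. }
  set (Z1 := (Mr * pr ^ 2 + rr) * (Nr + rr)). set (Z2 := pr ^ 2 * (4 * rr * Mr * Nr * (F * F))).
  replace (Z1 / rr * (Mr * Nr) * (Ca * Cb) ^ 2 * (PM * PN) ^ 2) with (Z1 * ((Mr * Nr) * (Ca * Cb) ^ 2 / rr) * (PM * PN) ^ 2) by (field; lra).
  replace (Z2 / rr * (Mr * Nr) * (Ca * Cb) ^ 2 * Pall ^ 2) with (Z2 * ((Mr * Nr) * (Ca * Cb) ^ 2 / rr) * Pall ^ 2) by (field; lra).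
  assert (0 <= Z1) by (unfold Z1; apply Rmult_le_pos; nra).
  destruct Q2 as [Q2a Q2b].
  apply Rmult_le_compat; auto.
  - apply Rmult_le_pos; lra.
  - apply Rmult_le_compat_r. lra. unfold Z1, Z2; lra.
Qed.
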